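(* Let $G$ be a graph of order $n$ with adjacency eigenvalues $\lambda_1(G)\ge\cdots\ge\lambda_n(G)$, let $F$ be a clique partition of $G$, and let $t_1^F$ be the largest clique-degree of $G$ with respect to $F$. Then $$\lambda_n(G)\ge -t_1^F.$$ Moreover, if equality holds then $\mathrm{rank}(\mathcal M_F)<n$; and if $\mathrm{rank}(\mathcal M_F)<n$ and $G$ is clique-regular with respect to $F$, then equality holds.
   Context: All graphs are finite and simple. A clique of $G$ is a set of pairwise adjacent vertices. A clique partition of $G$ is a set $F=\{C_1,\dots,C_k\}$ of cliques of $G$ such that every edge of $G$ lies in exactly one $C_j$. For $V(G)=\{1,\dots,n\}$, the vertex-clique incidence matrix $\mathcal M_F$ is the $n\times k$ $(0,1)$-matrix whose $(i,j)$-entry is $1$ iff vertex $i\in C_j$. The clique-degree of vertex $i$ is $t_i^F=|\{j: i\in C_j\}|$; $t_1^F$ denotes the largest clique-degree. $G$ is clique-regular (with respect to $F$) if all $t_i^F$ are equal. Eigenvalues of $G$ are those of its adjacency matrix. *)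

(* Defs.v *)
From mathcomp Require Import all_boot all_order all_algebra.
Set Implicit Arguments. Unset Strict Implicit. Unset Printing Implicit Defensive.
Import Order.TTheory GRing.Theory Num.Theory.
Local Open Scope ring_scope.

Definition simple_graph (n : nat) (e : rel 'I_n) : Prop :=
  (forall x, ~~ e x x) /\ (forall x y, e x y = e y x).

Definition is_clique (n : nat) (e : rel 'I_n) (C : {set 'I_n}) : Prop :=
  forall x y, x \in C -> y \in C -> x != y -> e x y.

Definition clique_partition (n : nat) (e : rel 'I_n) (F : {set {set 'I_n}}) : Prop :=
  (forall C, C \in F -> is_clique e C) /\
  (forall x y, e x y -> #|[set C in F | (x \in C) && (y \in C)]| = 1%N).

Definition clique_degree (n : nat) (F : {set {set 'I_n}}) (i : 'I_n) : nat :=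
  #|[set C in F | i \in C]|.

Definition max_clique_degree (n : nat) (F : {set {set 'I_n}}) : nat :=
  \max_(i < n) clique_degree F i.

Definition clique_regular (n : nat) (F : {set {set 'I_n}}) : Prop :=
  forall i j : 'I_n, clique_degree F i = clique_degree F j.

Definition adj_mx (R : nzRingType) (n : nat) (e : rel 'I_n) : 'M[R]_n :=
  \matrix_(i, j) (e i j)%:R.

Definition incidence_mx (R : nzRingType) (n : nat) (F : {set {set 'I_n}})
  : 'M[R]_(n, #|F|) :=
  \matrix_(i < n, j < #|F|) (i \in enum_val j)%:R.

(* l is the least eigenvalue lambda_n of the real square matrix A
   (for a real symmetric matrix over a real closed field, all eigenvalues lie in R). *)
Definition least_eigenvalue (R : realFieldType) (n : nat) (A : 'M[R]_n) (l : R) : Prop :=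
  eigenvalue A l /\ (forall a : R, eigenvalue A a -> l <= a).

(* Main.v *)
Require Import Defs.
From mathcomp Require Import all_boot all_order all_algebra.
Import Order.TTheory GRing.Theory Num.Theory.
Local Open Scope ring_scope.

Section Aux.
Variable R : rcfType.

Lemma mul_self_ge0 (x : R) : 0 <= x * x.
Proof. by rewrite -expr2 sqr_ge0. Qed.

Lemma rv_norm_ge0 m (w : 'rV[R]_m) : 0 <= (w *m w^T) 0 0.
Proof.
rewrite !mxE; apply: sumr_ge0 => k _; rewrite mxE; exact: mul_self_ge0.
Qed.

Lemma rv_norm_eq0 m (w : 'rV[R]_m) : (w *m w^T) 0 0 = 0 -> w = 0.
Proof.
rewrite !mxE => /eqP; rewrite psumr_eq0 => [/allP H|k _]; last first.
  by rewrite mxE; exact: mul_self_ge0.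
apply/rowP => k; rewrite mxE.
have := H k (mem_index_enum k); rewrite /= mxE => /eqP /eqP.
by rewrite mulf_eq0 orbb => /eqP.
Qed.

Lemma diag_form_ge0 m (w : 'rV[R]_m) (d : 'rV[R]_m) :
  (forall k, 0 <= d 0 k) -> 0 <= (w *m diag_mx d *m w^T) 0 0.
Proof.
move=> Hd; rewrite mul_mx_diag !mxE; apply: sumr_ge0 => k _; rewrite !mxE.
rewrite mulrC mulrA; apply: mulr_ge0 => //; exact: mul_self_ge0.
Qed.

End Aux.

Theorem mainTheorem1 (R : rcfType) (n : nat) (e : rel 'I_n) (F : {set {set 'I_n}}) :
  simple_graph e -> clique_partition e F ->
  let A : 'M[R]_n := adj_mx R e in
  let t1 : R := (max_clique_degree F)%:R in
  (* lambda_n(G) >= -t1 : every eigenvalue of A is at least -t1 *)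
  (forall a : R, eigenvalue A a -> - t1 <= a) /\
  (* equality lambda_n = -t1 implies rank M_F < n *)
  (least_eigenvalue A (- t1) -> (\rank (incidence_mx R F) < n)%N) /\
  (* rank M_F < n and clique-regularity imply equality *)
  ((\rank (incidence_mx R F) < n)%N -> clique_regular F -> least_eigenvalue A (- t1)).
Proof.
move=> [Hirr Hsym] [Hcl Hpart] A t1.
set M := incidence_mx R F.
set d : 'rV[R]_n := \row_i (t1 - (clique_degree F i)%:R).
have tle i : (clique_degree F i <= max_clique_degree F)%N.
  exact: (leq_bigmax (F := fun i => clique_degree F i)).
have dge0 k : 0 <= d 0 k by rewrite mxE subr_ge0 ler_nat.
have key : A + t1%:M = M *m M^T + diag_mx d.
  apply/matrixP => i j; rewrite !mxE.
  have -> : \sum_k M i k * M^T k j =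
      (#|[set C in F | (i \in C) && (j \in C)]|)%:R.
    rewrite (eq_bigr (fun k : 'I_#|F| => ((i \in (enum_val k : {set 'I_n})) && (j \in (enum_val k : {set 'I_n})))%:R)); last first.
      by move=> k _; rewrite !mxE -natrM mulnb.
    rewrite -(big_enum_val (A := mem F) (fun C => ((i \in C) && (j \in C))%:R)).
    have -> : #|[set C in F | (i \in C) && (j \in C)]| =
        (\sum_(C in F) ((i \in C) && (j \in C)))%N.
      rewrite -sum1_card (eq_bigl (fun C => (C \in F) && ((i \in C) && (j \in C)))); last first.
        by move=> C; rewrite !inE.
      by rewrite big_mkcondr /=; apply: eq_bigr => C _; case: ifP.
    by rewrite natr_sum.
  case: (eqVneq i j) => [<-|ij].
    rewrite (negbTE (Hirr i)) !mulr1n add0r.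
    have -> : [set C in F | (i \in C) && (i \in C)] = [set C in F | i \in C].
      by apply/setP => C; rewrite !inE andbb.
    by rewrite /clique_degree addrC subrK.
  rewrite !mulr0n addr0.
  case eij: (e i j); first by rewrite Hpart ?addr0.
  rewrite addr0 -[false%:R]/(0%:R); congr (_%:R); apply/esym/eqP.
  rewrite cards_eq0; apply/eqP/setP => C.
  rewrite !inE; apply/negbTE/negP => /andP [CF /andP [iC jC]].
  by move: (Hcl C CF i j iC jC ij); rewrite eij.
have quad (v : 'rV[R]_n) : v *m (A + t1%:M) *m v^T =
    (v *m M) *m (v *m M)^T + v *m diag_mx d *m v^T.
  by rewrite key mulmxDr mulmxDl !mulmxA trmx_mul mulmxA.
have part1 : forall a : R, eigenvalue A a -> - t1 <= a.
  move=> a /eigenvalueP [v Hv vn0].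
  have := quad v; rewrite mulmxDr Hv mul_mx_scalar -scalerDl -scalemxAl.
  move/(congr1 (fun B : 'M_1 => B 0 0)); rewrite [LHS]mxE [RHS]mxE => E.
  have H1 : 0 <= (a + t1) * (v *m v^T) 0 0.
    by rewrite E; apply: addr_ge0; [exact: rv_norm_ge0 | exact: diag_form_ge0].
  have H2 : 0 < (v *m v^T) 0 0.
    rewrite lt_def rv_norm_ge0 andbT; apply/eqP => /rv_norm_eq0 /eqP.
    by rewrite (negbTE vn0).
  by rewrite -subr_ge0 opprK -(pmulr_lge0 _ H2).
split => //; split.
  move=> [/eigenvalueP [v Hv vn0] _].
  have vM0 : v *m M = 0.
    have := quad v; rewrite mulmxDr Hv mul_mx_scalar scaleNr addNr mul0mx.
    move/(congr1 (fun B : 'M_1 => B 0 0)); rewrite [LHS]mxE [RHS]mxE => E.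
    apply: rv_norm_eq0; apply/eqP; rewrite eq_le rv_norm_ge0 andbT.
    have := @diag_form_ge0 R n v d dge0; rewrite -(lerD2l ((v *m M *m (v *m M)^T) 0 0)) -E addr0.
    done.
  rewrite ltn_neqAle rank_leq_row andbT; apply/negP => rf.
  move/eqP: vn0; apply; apply: (row_free_inj rf); by rewrite /= vM0 mul0mx.
move=> rk reg.
have kn0 : kermx M != 0.
  by rewrite -mxrank_eq0 mxrank_ker subn_eq0 -ltnNge.
case/rowV0Pn: kn0 => v /sub_kermxP vM0 vn0.
have d0 : d = 0.
  apply/rowP => k; rewrite !mxE; apply/eqP; rewrite subr_eq0 eqr_nat eqn_leq tle /=.
  rewrite andbT; apply/bigmax_leqP => i _; by rewrite (reg i k).
have ev : eigenvalue A (- t1).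
  apply/eigenvalueP; exists v => //.
  have := key; move/(congr1 (mulmx v)); rewrite !mulmxDr mulmxA vM0 mul0mx mul_mx_diag d0.
  have -> : \matrix_(i, j) (v i j * (0 : 'rV[R]_n) 0 j) = 0.
    by apply/matrixP => i j; rewrite !mxE mulr0.
  rewrite addr0 mul_mx_scalar => /eqP; rewrite addr_eq0 => /eqP ->.
  by rewrite scaleNr.
by split.
Qed.
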